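(* Let $G$ be a simple graph with edge set $E(G)=\{e_1,\ldots,e_r\}$ and let $s\geq 1$ be an integer. Then for any product $u=e_{i_1}\cdots e_{i_s}$ of $s$ (not necessarily distinct) edges, we have $$\big(I(G)^{(s+1)}:u\big)=\Big(\big(I(G)^{(2)}:e_{i_1}\big)^{(s)}: e_{i_2}\cdots e_{i_s}\Big).$$
   Context: $S=\mathbb{K}[x_1,\dots,x_n]$ over a field $\mathbb{K}$; vertices of $G$ are the variables and edges are identified with quadratic squarefree monomials. $I(G)$ is the edge ideal generated by the edges. For a squarefree monomial ideal $J$ with irredundant decomposition $J=\mathfrak{p}_1\cap\dots\cap\mathfrak{p}_r$ into monomial primes, $J^{(s)}=\mathfrak{p}_1^s\cap\dots\cap\mathfrak{p}_r^s$; in particular $I(G)^{(s)}=\bigcap_{C\in\mathcal{C}(G)}\mathfrak{p}_C^s$, where $\mathcal{C}(G)$ is the set of minimal vertex covers of $G$ and $\mathfrak{p}_C$ is generated by the variables in $C$. (Note $(I(G)^{(2)}:e)$ is a squarefree monomial ideal, so its symbolic power is defined in this way.) *)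

(* Defs.v *)
(* Monomial ideals of S = K[x_0..x_{n-1}] are modelled by their
   sets of monomials (exponent vectors 'I_n -> nat). *)
From mathcomp Require Import all_boot.
Set Implicit Arguments. Unset Strict Implicit. Unset Printing Implicit Defensive.

Definition mono (n : nat) := 'I_n -> nat.
Definition mideal (n : nat) := mono n -> Prop.

Definition mmul n (a b : mono n) : mono n := fun k => a k + b k.
Definition mone n : mono n := fun _ => 0.
Definition edge_mono n (ij : 'I_n * 'I_n) : mono n :=
  fun k => (k == ij.1) + (k == ij.2).
Definition edges_prod n (es : seq ('I_n * 'I_n)) : mono n :=
  foldr (fun ij acc => mmul (edge_mono ij) acc) (@mone n) es.

Definition simple_graph n (e : rel 'I_n) := irreflexive e /\ symmetric e.

Definition edge_ideal n (e : rel 'I_n) : mideal n :=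
  fun m => exists i j, e i j /\ 0 < m i /\ 0 < m j.

Definition colon n (J : mideal n) (u : mono n) : mideal n := fun m => J (mmul m u).

(* power of the monomial prime p_C: monomials of degree >= s in the variables of C *)
Definition primepow n (C : {set 'I_n}) (s : nat) : mideal n :=
  fun m => s <= \sum_(i in C) m i.

Definition vertex_cover n (e : rel 'I_n) (C : {set 'I_n}) :=
  forall i j, e i j -> i \in C \/ j \in C.
Definition min_vertex_cover n (e : rel 'I_n) (C : {set 'I_n}) :=
  vertex_cover e C /\ forall D : {set 'I_n}, D \proper C -> ~ vertex_cover e D.

(* I(G)^(s) = intersection over minimal vertex covers C of p_C^s *)
Definition edge_symb n (e : rel 'I_n) (s : nat) : mideal n :=
  fun m => forall C, min_vertex_cover e C -> primepow C s m.

Definition prime_contains n (J : mideal n) (C : {set 'I_n}) :=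
  forall m, J m -> exists2 i, i \in C & 0 < m i.
(* minimal monomial primes of J (for squarefree J these are exactly the
   primes of its irredundant primary decomposition) *)
Definition min_prime n (J : mideal n) (C : {set 'I_n}) :=
  prime_contains J C /\ forall D : {set 'I_n}, D \proper C -> ~ prime_contains J D.
Definition sqfree_symb n (J : mideal n) (s : nat) : mideal n :=
  fun m => forall C, min_prime J C -> primepow C s m.

(* Main.v *)
Require Import Defs.
From mathcomp Require Import all_boot.
From mathcomp Require Import zify.
From Stdlib Require Import Classical.

Section Aux.
Variable n : nat.
Implicit Types (C D : {set 'I_n}) (m : mono n).

Lemma sumD C (x y : mono n) :
  \sum_(k in C) mmul x y k = \sum_(k in C) x k + \sum_(k in C) y k.
Proof. by rewrite /mmul big_split. Qed.

Lemma sum_eq1 C (i : 'I_n) : \sum_(k in C) ((k == i) : nat) = (i \in C).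
Proof.
case iC: (i \in C).
  rewrite (bigD1 i) //= eqxx big1 // => k /andP[_ /negbTE ->] //.
rewrite big1 // => k kC; case: eqP => // ki; by rewrite -ki kC in iC.
Qed.

Lemma sum_edge C (ij : 'I_n * 'I_n) :
  \sum_(k in C) edge_mono ij k = (ij.1 \in C) + (ij.2 \in C).
Proof. by rewrite /edge_mono big_split /= !sum_eq1. Qed.

Lemma cover_edge {e : rel 'I_n} {C ij} : vertex_cover e C -> e ij.1 ij.2 ->
  1 <= \sum_(k in C) edge_mono ij k.
Proof.
move=> cC hij; rewrite sum_edge; case: (cC _ _ hij) => -> //.
by rewrite addn1.
Qed.

Lemma cover_prod {e : rel 'I_n} {C es} : vertex_cover e C ->
  all (fun ij => e ij.1 ij.2) es -> size es <= \sum_(k in C) edges_prod es k.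
Proof.
move=> cC; elim: es => [|ij es IH] //= /andP[h1 h2].
have := cover_edge cC h1; have := IH h2.
rewrite (sumD C (edge_mono ij) (edges_prod es)); lia.
Qed.

Lemma le_sum C m k : k \in C -> m k <= \sum_(k in C) m k.
Proof. by move=> kC; rewrite (bigD1 k) //= leq_addr. Qed.

Lemma sum_pos C m : 0 < \sum_(k in C) m k -> exists2 k, k \in C & 0 < m k.
Proof.
case: (pickP (fun k => (k \in C) && (0 < m k))) => [k /andP[h1 h2] _|h].
  by exists k.
rewrite big1 // => k kC; have := h k; rewrite kC /=; by case: (m k).
Qed.

Lemma cover_sup {e : rel 'I_n} {C D} : vertex_cover e D -> D \subset C ->
  vertex_cover e C.
Proof.
move=> cD /subsetP sDC x y hxy; case: (cD _ _ hxy) => h; [left|right]; exact: sDC.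
Qed.

Lemma ind_mem C D : ~~ (C \subset D) ->
  1 <= \sum_(k in C) (fun k : 'I_n => nat_of_bool (k \notin D)) k.
Proof.
case/subsetPn => k kC kD.
have := le_sum C (fun k : 'I_n => nat_of_bool (k \notin D)) k kC; rewrite /= kD; exact.
Qed.

Variable e : rel 'I_n.
Variable a : 'I_n * 'I_n.
Hypothesis ha : e a.1 a.2.

Let J := colon (edge_symb e 2) (edge_mono a).

Lemma LJ m : J m <-> forall C, min_vertex_cover e C ->
  2 <= \sum_(k in C) m k + ((a.1 \in C) + (a.2 \in C)).
Proof.
rewrite /J /colon /edge_symb /primepow; split => H C /H; by rewrite sumD sum_edge.
Qed.

Lemma P2a C : min_vertex_cover e C -> ~~ ((a.1 \in C) && (a.2 \in C)) ->
  prime_contains J C.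
Proof.
move=> Cm nb x /LJ /(_ C Cm) h; apply: sum_pos.
move: nb h; case: (a.1 \in C); case: (a.2 \in C) => //= _; lia.
Qed.

Lemma notcov_J D : (forall C, min_vertex_cover e C -> ~~ (C \subset D) \/
    ((a.1 \in C) && (a.2 \in C))) ->
  J (fun k : 'I_n => nat_of_bool (k \notin D)).
Proof.
move=> H; apply/LJ => C Cm.
have := cover_edge Cm.1 ha; rewrite sum_edge.
case: (H C Cm) => [/ind_mem /= h1 h2|/andP[-> ->]] //.
  move: h1 h2; move: (\sum_(k in C) _) ((a.1 \in C) + (a.2 \in C))%N => x y; lia.
move=> _; move: (\sum_(k in C) _) => x; lia.
Qed.

Lemma notprime D : prime_contains J D -> ~ J (fun k : 'I_n => nat_of_bool (k \notin D)).
Proof. by move=> pD /pD [k kD]; rewrite kD. Qed.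

Lemma P2 C : min_vertex_cover e C -> ~~ ((a.1 \in C) && (a.2 \in C)) ->
  min_prime J C.
Proof.
move=> Cm nb; split; first exact: P2a.
move=> D DC pD; apply: (notprime _ pD); apply: notcov_J => C' C'm; left.
apply/negP => sub; apply: (Cm.2 D DC); exact: cover_sup C'm.1 sub.
Qed.

Lemma P1 C : min_prime J C -> min_vertex_cover e C /\ ~~ ((a.1 \in C) && (a.2 \in C)).
Proof.
move=> [pC minC].
case: (classic (exists C', [/\ min_vertex_cover e C', ~~ ((a.1 \in C') && (a.2 \in C'))
   & C' \subset C])) => [[C' [C'm nb sub]]|H].
  case: (eqVneq C' C) => [<- //|neq].
  exfalso; apply: (minC C'); last exact: P2a.
  by rewrite properEneq neq sub.
exfalso; apply: (notprime _ pC); apply: notcov_J => C' C'm.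
case: (boolP ((a.1 \in C') && (a.2 \in C'))) => nb; [by right|left].
apply/negP => sub; apply: H; by exists C'.
Qed.

End Aux.

Theorem lemma3p3 (n : nat) (e : rel 'I_n) (hG : simple_graph e)
  (s : nat) (hs : 1 <= s)
  (a : 'I_n * 'I_n) (rest : seq ('I_n * 'I_n))
  (ha : e a.1 a.2) (hrest : all (fun ij => e ij.1 ij.2) rest)
  (hsize : size rest = s.-1) :
  forall m : mono n,
    colon (edge_symb e s.+1) (edges_prod (a :: rest)) m <->
    colon (sqfree_symb (colon (edge_symb e 2) (edge_mono a)) s) (edges_prod rest) m.
Proof.
move=> m; rewrite /colon /edge_symb /sqfree_symb /primepow /=; split.
  move=> H C /(P1 _ _ _ ha) [Cm nb]; have := H C Cm.
  rewrite !sumD !sum_eq1; move: nb.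
  case: (a.1 \in C); case: (a.2 \in C) => //= _; lia.
move=> H C Cm; rewrite !sumD !sum_eq1.
case: (boolP ((a.1 \in C) && (a.2 \in C))) => [/andP[-> ->]|nb].
  have := cover_prod _ Cm.1 hrest; rewrite hsize; lia.
have := H C (P2 _ _ _ ha _ Cm nb); rewrite sumD.
have := cover_edge _ Cm.1 ha; rewrite sum_edge.
move: (\sum_(k in C) m k) (\sum_(k in C) edges_prod rest k) ((a.1 \in C) + (a.2 \in C))%N => x y z; lia.
Qed.
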